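(* Let $n\ge2$ and $|\psi\rangle_{ABS}\in\mathbb{C}^2\otimes\mathbb{C}^2\otimes\mathbb{C}^n$. For orthonormal bases $\{|i\rangle_A\}_{i=0,1}$, $\{|j\rangle_B\}_{j=0,1}$, $\{|l\rangle_S\}_{l=1,\dots,n}$, write $a^l_{ij}={}_A\langle i|{}_B\langle j|{}_S\langle l|\psi\rangle_{ABS}$ and let $A^l$ be the $2\times2$ matrix with entries $(A^l)_{ij}=a^l_{ij}$. Then there exist orthonormal bases of Alice's, Bob's and Sapna's spaces such that the matrices $A^{l\dagger}A^l$ are diagonal for all $l$; similarly, there exist (possibly different) orthonormal bases such that the matrices $A^lA^{l\dagger}$ are diagonal for all $l$. *)

(* Defs.v *)
From HB Require Import structures.
From mathcomp Require Import all_boot all_order all_algebra.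
From mathcomp Require Import complex.
From mathcomp Require Import reals.
From mathcomp Require Export spectral.
Set Implicit Arguments. Unset Strict Implicit. Unset Printing Implicit Defensive.
Import Order.TTheory GRing.Theory Num.Theory.
Local Open Scope ring_scope.
Local Open Scope complex_scope.

(* A tripartite state |psi>_{ABS} in C^2 (x) C^2 (x) C^n is given by its
   coefficients psi i j l = <i|<j|<l|psi> in the standard (computational) bases. *)

(* An orthonormal basis of C^m is given by a unitary matrix U : 'M_m
   (U *m U^t* = 1): the k-th basis vector is |k'> = sum_x U k x |x>,
   i.e. row k of U. *)

(* Coefficient matrix A^l in the new bases (U for Alice, V for Bob, W for Sapna):
   (A^l)_{ij} = <i'|<j'|<l'|psi> = sum_{x,y,z} conj(U i x) conj(V j y) conj(W l z) psi x y z. *)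
Definition coef_mx (R : realType) (n : nat)
  (psi : 'I_2 -> 'I_2 -> 'I_n -> R[i])
  (U V : 'M[R[i]]_2) (W : 'M[R[i]]_n) (l : 'I_n) : 'M[R[i]]_2 :=
  \matrix_(i < 2, j < 2)
    \sum_(x < 2) \sum_(y < 2) \sum_(z < n)
      (U i x)^* * (V j y)^* * (W l z)^* * psi x y z.

(* Main.v *)
Require Import Defs.
From HB Require Import structures.
From mathcomp Require Import all_boot all_order all_algebra.
From mathcomp Require Import complex reals spectral.
From mathcomp Require Import ring.
Import Order.TTheory GRing.Theory Num.Theory.

Module Helpers.
Set Implicit Arguments. Unset Strict Implicit. Unset Printing Implicit Defensive.
Local Open Scope ring_scope.
Local Open Scope sesquilinear_scope.

Section Gen.
Variable C : numClosedFieldType.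

Definition bf n (H : 'M[C]_n) (u v : 'rV[C]_n) : C := (u *m H *m v^t*) 0 0.

Lemma bfDl n (H : 'M[C]_n) a b u v w :
  bf H (a *: u + b *: v) w = a * bf H u w + b * bf H v w.
Proof. by rewrite /bf !mulmxDl -!scalemxAl !mxE. Qed.

Lemma bfDr n (H : 'M[C]_n) a b u v w :
  bf H w (a *: u + b *: v) = a^* * bf H w u + b^* * bf H w v.
Proof.
by rewrite /bf linearD /= !linearZ /= map_mxD !map_mxZ mulmxDr -!scalemxAr !mxE.
Qed.

Lemma bf2 n (H : 'M[C]_n) a b c d u v :
  bf H (a *: u + b *: v) (c *: u + d *: v) =
  a * c^* * bf H u u + a * d^* * bf H u v + b * c^* * bf H v u + b * d^* * bf H v v.
Proof. rewrite bfDl !bfDr; ring. Qed.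

Lemma bf_herm n (H : 'M[C]_n) u v : H^t* = H -> bf H v u = (bf H u v)^*.
Proof.
move=> hH; rewrite /bf.
have -> : ((u *m H *m v^t*) 0 0)^* = ((u *m H *m v^t*)^t*) 0 0 by rewrite !mxE.
by rewrite !trmx_mul !map_mxM trmxCK hH mulmxA.
Qed.

Lemma bf_real n (H : 'M[C]_n) u : H^t* = H -> bf H u u \is Num.real.
Proof. by move=> hH; apply/CrealP; rewrite -bf_herm. Qed.

Lemma bf_mxE m n p (A : 'M[C]_(m, n)) (B : 'M[C]_n) (D : 'M[C]_(p, n)) i j :
  (A *m B *m D^t*) i j = bf B (row i A) (row j D).
Proof.
rewrite /bf -!row_mul !mxE; apply: eq_bigr => k _; rewrite !mxE.
by congr (_ * _); rewrite !mxE.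
Qed.

Lemma bfHD n (H1 H2 : 'M[C]_n) a u v : bf (H1 + a *: H2) u v = bf H1 u v + a * bf H2 u v.
Proof. by rewrite /bf mulmxDr -scalemxAr mulmxDl -scalemxAl !mxE. Qed.

Lemma bf0 n (u v : 'rV[C]_n) : bf 0 u v = 0.
Proof. by rewrite /bf mulmx0 mul0mx mxE. Qed.

Lemma unitary_bf m n (W : 'M[C]_(m, n)) :
  W \is unitarymx <-> forall p q, bf 1%:M (row p W) (row q W) = (p == q)%:R.
Proof.
split.
  by move=> /row_unitarymxP h p q; rewrite -h dotmxE /bf mulmx1.
by move=> h; apply/row_unitarymxP => p q; rewrite dotmxE -h /bf mulmx1.
Qed.

Lemma trace_bf n (W H : 'M[C]_n) : W \is unitarymx ->
  \sum_l bf H (row l W) (row l W) = \tr H.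
Proof.
move=> hW; rewrite -(eq_bigr _ (fun l _ => bf_mxE W H W l l)) -/(mxtrace _).
rewrite mxtrace_mulC mulmxA.
have : W^t* \is unitarymx by rewrite trmxC_unitary.
by move=> /unitarymxP; rewrite trmxCK => ->; rewrite mul1mx.
Qed.


Lemma bf1_sym n (u v : 'rV[C]_n) : bf 1%:M u v = 0 -> bf 1%:M v u = 0.
Proof. by move=> h; rewrite bf_herm ?h ?conjC0 // trmx1 map_mx1. Qed.

Lemma move n (H1 H2 : 'M[C]_n) (x y : 'rV[C]_n) :
  H1^t* = H1 -> H2^t* = H2 ->
  bf 1%:M x x = 1 -> bf 1%:M y y = 1 -> bf 1%:M x y = 0 ->
  bf H1 x x = 0 -> bf H1 y y = 0 -> bf H2 x x * bf H2 y y < 0 ->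
  exists a b a' b' : C,
   [/\ bf 1%:M (a*:x+b*:y) (a*:x+b*:y) = 1, bf 1%:M (a'*:x+b'*:y) (a'*:x+b'*:y) = 1,
       bf 1%:M (a*:x+b*:y) (a'*:x+b'*:y) = 0,
       bf H1 (a*:x+b*:y) (a*:x+b*:y) = 0 &
       bf H1 (a'*:x+b'*:y) (a'*:x+b'*:y) = 0 /\ bf H2 (a*:x+b*:y) (a*:x+b*:y) = 0].
Proof.
move=> hH1 hH2 xx yy xy H1x H1y neg.
have yx := bf1_sym xy.
have H1yx := bf_herm x y hH1; have H2yx := bf_herm x y hH2.
set h := bf H1 x y in H1yx *; set h' := bf H2 x y in H2yx *.
have k1R := bf_real x hH2; have k2R := bf_real y hH2.
set k1 := bf H2 x x in neg k1R *; set k2 := bf H2 y y in neg k2R *.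
have k1n0 : k1 != 0 by apply: contraTneq neg => ->; rewrite mul0r ltxx.
have [e [en0 ec eh]] : exists e, [/\ e != 0, e^* = e^-1 & e^-1 * h + e * h^* = 0].
  case: (eqVneq h 0) => [->|hn0].
    by exists 1; rewrite oner_neq0 conjC1 invr1 conjC0 !mulr0 addr0.
  have nh0 : `|h| != 0 by rewrite normr_eq0.
  set e := 'i * h / `|h|.
  have en0 : e != 0 by rewrite /e !mulf_neq0 ?neq0Ci ?invr_eq0.
  have ec : e^* = e^-1.
    have ee : e * e^* = 1.
      rewrite /e !rmorphM fmorphV /= conj_normC conjCi.
      transitivity (- 'i^+2 * (h * h^*) / `|h|^+2); first by field; rewrite ?Nn0 ?en0.
      by rewrite sqrCi -normCK opprK mul1r divff // expf_neq0.
    by rewrite -[e^*](mulKf en0) ee mulr1.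
  exists e; split => //; rewrite -ec /e !rmorphM fmorphV /= conj_normC conjCi.
  by field.
set rho := e^-1 * h' + e * h'^*.
have rhoR : rho \is Num.real.
  apply/CrealP; rewrite /rho rmorphD !rmorphM fmorphV /= ec invrK conjCK.
  by rewrite addrC.
set D := rho * rho - 4 * (k1 * k2).
have D0 : 0 <= D.
  have -> : D = rho * rho^* + 4 * (- (k1 * k2)) by rewrite /D (conj_Creal rhoR) mulrN.
  by rewrite addr_ge0 ?mul_conjC_ge0 // mulr_ge0 // oppr_ge0 ltW.
set r := sqrtC D.
have rR : r \is Num.real by apply: sqrtC_real.
have r2 : r ^+ 2 = D by apply: sqrtCK.
set c := (r - rho) / (2 * k1).
have cR : c \is Num.real by rewrite rpredM ?rpredV ?rpredB ?rpredM ?realn.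
have cc := conj_Creal cR.
have quad : k1 * c ^+ 2 + rho * c + k2 = 0.
  transitivity ((r^+2 - (rho * rho - 4 * (k1 * k2))) / (4 * k1)).
    rewrite /c; field.
    exact: k1n0.
  by rewrite r2 subrr mul0r.
have pos : 0 < c * c + 1.
  by rewrite -{2}cc ltr_wpDl ?mul_conjC_ge0 ?ltr01.
set N := sqrtC (c * c + 1).
have Npos : 0 < N by rewrite sqrtC_gt0.
have Nn0 : N != 0 by rewrite gt_eqF.
have Nc : N^* = N by apply: conj_Creal; apply: gtr0_real.
have NN : N ^+ 2 = c * c + 1 by apply: sqrtCK.
have N2n0 : N ^+ 2 != 0 by rewrite expf_neq0.
exists (c / N), (e / N), (- e^-1 / N), (c / N).
rewrite !bf2 xx yy xy yx H1x H1y H1yx H2yx.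
rewrite -/h -/h' -/k1 -/k2.
have rhoE : rho = e^-1 * h' + e * h'^* by [].
clearbody N c r D rho.
rewrite !(rmorphM, fmorphV, rmorphN) /= !(cc, Nc, ec, invrK).
split; last split.
- transitivity ((c * c + 1) / N ^+ 2); first by field; rewrite ?Nn0 ?en0.
  by rewrite NN divff // -NN.
- transitivity ((c * c + 1) / N ^+ 2); first by field; rewrite ?Nn0 ?en0.
  by rewrite NN divff // -NN.
- by field; rewrite ?Nn0 ?en0.
- transitivity (c / N ^+ 2 * (e^-1 * h + e * h^*)); first by field; rewrite ?Nn0 ?en0.
  by rewrite eh mulr0.
- transitivity (- c / N ^+ 2 * (e^-1 * h + e * h^*)); first by field; rewrite ?Nn0 ?en0.
  by rewrite eh mulr0.
- transitivity ((k1 * c ^+ 2 + rho * c + k2) / N ^+ 2); first by rewrite rhoE; field; rewrite ?Nn0 ?en0.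
  by rewrite quad mul0r.
Qed.


Definition S n (H : 'M[C]_n) (W : 'M[C]_n) := [set l | bf H (row l W) (row l W) != 0].

Lemma step n (H1 H2 : 'M[C]_n) (W : 'M[C]_n) j :
  H1^t* = H1 -> H2^t* = H2 -> \tr H2 = 0 -> W \is unitarymx ->
  (forall l, bf H1 (row l W) (row l W) = 0) ->
  bf H2 (row j W) (row j W) != 0 ->
  exists W' : 'M[C]_n, [/\ W' \is unitarymx, (forall l, bf H1 (row l W') (row l W') = 0) &
     (#|S H2 W'| < #|S H2 W|)%N].
Proof.
move=> hH1 hH2 tr0 hW hW1 dj.
have oW := (unitary_bf W).1 hW.
pose d l := bf H2 (row l W) (row l W).
have dR l : d l \is Num.real by apply: bf_real.
have [k neg] : exists k, d j * d k < 0.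
  apply/existsP; apply: contraNT dj; rewrite negb_exists => /forallP hk.
  have h0 : forall l, true -> 0 <= d j * d l.
    by move=> l _; have := hk l; rewrite real_ltNge ?rpredM // ?real0 negbK.
  have := psumr_eq0P h0; rewrite -mulr_sumr trace_bf // tr0 mulr0 => /(_ erefl j isT).
  by move/eqP; rewrite mulf_eq0 orbb.
have jk : j != k.
  apply: contraTneq neg => <-; rewrite -[X in _ * X](conj_Creal (dR j)).
  by rewrite le_gtF // mul_conjC_ge0.
have ojj := oW j j; have okk := oW k k; have ojk := oW j k.
rewrite eqxx in ojj; rewrite eqxx in okk; rewrite (negbTE jk) in ojk.
have [a [b [a' [b' [n1 n2 n12 z1 [z2 z3]]]]]] :=
  move hH1 hH2 ojj okk ojk (hW1 j) (hW1 k) neg.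
pose W' := \matrix_l (if l == j then a *: row j W + b *: row k W
   else if l == k then a' *: row j W + b' *: row k W else row l W).
exists W'; split.
- apply/unitary_bf => p q; rewrite !rowK.
  have oz r : r != j -> r != k -> forall u v,
      bf 1%:M (u *: row j W + v *: row k W) (row r W) = 0 /\
      bf 1%:M (row r W) (u *: row j W + v *: row k W) = 0.
    move=> rj rk u v; rewrite bfDl bfDr !oW.
    by rewrite ?(eq_sym j) ?(eq_sym k) (negbTE rj) (negbTE rk) !mulr0 addr0.
  have [pj|pj] := eqVneq p j; have [qj|qj] := eqVneq q j; try subst p; try subst q.
  + by rewrite eqxx.
  + have [qk|qk] := eqVneq q k; first by subst q; rewrite (negbTE jk).
    by rewrite (oz q qj qk a b).1 eq_sym (negbTE qj).
  + have [pk|pk] := eqVneq p k; first by subst p; rewrite (bf1_sym n12) eq_sym (negbTE jk).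
    by rewrite (oz p pj pk a b).2 (negbTE pj).
  + have [pk|pk] := eqVneq p k; have [qk|qk] := eqVneq q k; try subst p; try subst q.
    * by rewrite eqxx.
    * by rewrite (oz q qj qk a' b').1 eq_sym (negbTE qk).
    * by rewrite (oz p pj pk a' b').2 (negbTE pk).
    * exact: oW.
- move=> l; rewrite !rowK; case: eqVneq => // _; case: eqVneq => // _.
- have sub : S H2 W' \subset S H2 W :\ j.
    apply/subsetP => l; rewrite !inE !rowK.
    case: (eqVneq l j) => [_|lj]; first by rewrite z3 eqxx.
    case: (eqVneq l k) => [->|lk] //= _.
    by apply: contraTneq neg => hk; rewrite /d hk mulr0 ltxx.
  have := subset_leq_card sub; rewrite (cardsD1 j (S H2 W)) inE dj /=.
  by rewrite add1n ltnS.
Qed.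

Lemma phase n (H1 H2 : 'M[C]_n) : H1^t* = H1 -> H2^t* = H2 -> \tr H2 = 0 ->
  forall W : 'M[C]_n, W \is unitarymx -> (forall l, bf H1 (row l W) (row l W) = 0) ->
  exists W' : 'M[C]_n, [/\ W' \is unitarymx, (forall l, bf H1 (row l W') (row l W') = 0) &
    (forall l, bf H2 (row l W') (row l W') = 0)].
Proof.
move=> hH1 hH2 tr0 W.
move: {2}#|S H2 W| (leqnn #|S H2 W|) => m.
elim: m W => [|m IH] W hm hW hW1.
  exists W; split => // l; apply/eqP; apply: contraTT hm => hl.
  by rewrite -ltnNge card_gt0; apply/set0Pn; exists l; rewrite inE.
case: (boolP [exists l, bf H2 (row l W) (row l W) != 0]) => [/existsP [j dj]|].
  have [W' [hW' hW'1 lt]] := step hH1 hH2 tr0 hW hW1 dj.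
  by apply: (IH W') => //; rewrite -ltnS (leq_trans lt).
rewrite negb_exists => /forallP h.
by exists W; split => // l; apply/eqP; have := h l; rewrite negbK.
Qed.


Lemma tr_conjT n (M : 'M[C]_n) : \tr (M^t*) = (\tr M)^*.
Proof. by rewrite trace_map_mx mxtrace_tr. Qed.

Lemma zero_diag n (M : 'M[C]_n) : \tr M = 0 ->
  exists W : 'M[C]_n, W \is unitarymx /\ forall l, (W *m M *m W^t*) l l = 0.
Proof.
move=> trM.
have i0 : ('i : C) != 0 by apply: neq0Ci.
have two0 : (2 : C) != 0 by rewrite pnatr_eq0.
pose H1 := 2^-1 *: (M + M^t*).
pose H2 := (2 * 'i)^-1 *: (M - M^t*).
have hH1 : H1^t* = H1.
  rewrite /H1 linearZ /= map_mxZ linearD /= map_mxD trmxCK.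
  by rewrite fmorphV /= conjC_nat addrC.
have hH2 : H2^t* = H2.
  rewrite /H2 linearZ /= map_mxZ linearB /= map_mxB trmxCK.
  rewrite fmorphV rmorphM /= conjC_nat conjCi.
  apply/matrixP => p q; rewrite !mxE; field.
  by rewrite i0.
have trH1 : \tr H1 = 0 by rewrite /H1 mxtraceZ mxtraceD tr_conjT trM conjC0 addr0 mulr0.
have trH2 : \tr H2 = 0 by rewrite /H2 mxtraceZ linearB /= tr_conjT trM conjC0 subr0 mulr0.
have MH : M = H1 + 'i *: H2.
  apply/matrixP => p q; rewrite /H1 /H2 !mxE; field.
  by rewrite i0.
have h0 : (0 : 'M[C]_n)^t* = 0 by rewrite trmx0 map_mx0.
have u1 : (1%:M : 'M[C]_n) \is unitarymx.
  by apply/unitarymxP; rewrite trmx1 map_mx1 mulmx1.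
have [W1 [hW1 _ hW1']] := phase h0 hH1 trH1 u1 (fun l => bf0 _ _).
have [W2 [hW2 z1 z2]] := phase hH1 hH2 trH2 hW1 hW1'.
exists W2; split => // l.
by rewrite bf_mxE MH bfHD z1 z2 mulr0 addr0.
Qed.

End Gen.

Lemma ord2_neq (i j : 'I_2) : i != j :> nat -> (i = 0 /\ j = 1) \/ (i = 1 /\ j = 0).
Proof.
case: i => [[|[|//]] ?]; case: j => [[|[|//]] ?] //= _; [left|right];
  by split; apply: val_inj.
Qed.

Section Main.
Variable R : realType.
Local Notation C := R[i].

Lemma diag2 (X : 'M[C]_2) : X^t* = X -> X 0 1 = 0 -> is_diag_mx X.
Proof.
move=> hX h; apply/is_diag_mxP => i j /ord2_neq [[-> ->]|[-> ->]] //.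
by rewrite -hX !mxE h conjC0.
Qed.

Lemma part1 n (psi : 'I_2 -> 'I_2 -> 'I_n -> C) :
  exists (U V : 'M[C]_2) (W : 'M[C]_n),
     [/\ U \is unitarymx, V \is unitarymx, W \is unitarymx &
         forall l : 'I_n,
           is_diag_mx ((coef_mx psi U V W l)^t* *m coef_mx psi U V W l)].
Proof.
pose P (x : 'I_2) : 'M[C]_(2, n) := \matrix_(y, z) psi x y z.
pose G := \sum_(x < 2) P x *m (P x)^t*.
have hG : G^t* = G.
  rewrite /G linear_sum /= raddf_sum; apply: eq_bigr => x _.
  by rewrite /= trmx_mul map_mxM trmxCK.
have Gn : G \is normalmx by apply/normalmxP; rewrite hG.
pose Q := spectralmx G.
have hQ : Q \is unitarymx := spectral_unitarymx G.
have /orthomx_spectralP GE := Gn.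
have QGQ : Q *m G *m Q^t* = diag_mx (spectral_diag G).
  rewrite [in LHS]GE invmx_unitary // !mulmxA (unitarymxP hQ) mul1mx.
  by rewrite -mulmxA (unitarymxP hQ) mulmx1.
pose V := Q ^ Num.conj.
have hV : V \is unitarymx by rewrite conjC_unitary.
pose B x := Q *m P x.
pose M := \sum_(x < 2) (row 0 (B x))^t* *m row 1 (B x).
have trM : \tr M = 0.
  rewrite /M linear_sum /=.
  have -> : \sum_(x < 2) \tr ((row 0 (B x))^t* *m row 1 (B x)) =
            \sum_(x < 2) (B x *m 1%:M *m (B x)^t*) 1 0.
    apply: eq_bigr => x _; rewrite mxtrace_mulC trace_mx11 bf_mxE /bf.
    by rewrite mulmx1.
  rewrite -summxE.
  have -> : \sum_(x < 2) B x *m 1%:M *m (B x)^t* = Q *m G *m Q^t*.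
    rewrite /G mulmx_sumr mulmx_suml; apply: eq_bigr => x _.
    by rewrite mulmx1 /B trmx_mul map_mxM !mulmxA.
  by rewrite QGQ mxE.
have [W [hW hWd]] := zero_diag trM.
have u1 : (1%:M : 'M[C]_2) \is unitarymx.
  by apply/unitarymxP; rewrite trmx1 map_mx1 mulmx1.
exists 1%:M, V, W; split => // l.
set A := coef_mx psi 1%:M V W l.
have AE a j : A a j = (B a *m W^t*) j l.
  rewrite /A /coef_mx mxE (bigD1 a) //= [X in _ + X]big1 => [|x xa]; last first.
    by apply: big1 => y _; apply: big1 => z _; rewrite !mxE eq_sym (negbTE xa) conjC0 !mul0r.
  rewrite addr0 exchange_big /= [RHS]mxE; apply: eq_bigr => z _.
  rewrite /B [(Q *m P a) j z]mxE mulr_suml; apply: eq_bigr => y _.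
  by rewrite !mxE eqxx conjC1 mul1r conjCK; ring.
have hX : (A^t* *m A)^t* = A^t* *m A by rewrite trmx_mul map_mxM trmxCK.
apply: diag2 => //.
rewrite -(hWd l) /M mulmx_sumr mulmx_suml summxE mxE; apply: eq_bigr => x _.
rewrite !mulmxA -mulmxA [RHS]mxE big_ord1.
have -> : W *m (row 0 (B x))^t* = (row 0 (B x) *m W^t*)^t*.
  by rewrite trmx_mul map_mxM trmxCK.
have Ac : (A^t*) 0 x = (A x 0)^* by rewrite !mxE.
by rewrite Ac !AE -!row_mul !mxE.
Qed.


Lemma coef_swap n (psi : 'I_2 -> 'I_2 -> 'I_n -> C) U V W l :
  coef_mx (fun x y z => psi y x z) V U W l = (coef_mx psi U V W l)^T.
Proof.
apply/matrixP => i j; rewrite [RHS]mxE !mxE exchange_big; apply: eq_bigr => x _.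
apply: eq_bigr => y _; apply: eq_bigr => z _; rewrite mulrAC.
rewrite [(V i y)^* * _]mulrC -!mulrA; congr (_ * (_ * _)); exact: mulrC.
Qed.

Lemma part2 n (psi : 'I_2 -> 'I_2 -> 'I_n -> C) :
  exists (U V : 'M[C]_2) (W : 'M[C]_n),
     [/\ U \is unitarymx, V \is unitarymx, W \is unitarymx &
         forall l : 'I_n,
           is_diag_mx (coef_mx psi U V W l *m (coef_mx psi U V W l)^t*)].
Proof.
pose psi' := fun (x y : 'I_2) (z : 'I_n) => psi y x z.
have := @part1 n psi'.
case=> U [V [W [hU hV hW hd]]].
exists V, U, W; split; [exact: hV | exact: hU | exact: hW | move=> l].
have := hd l; rewrite /psi' (coef_swap psi V U W l) -is_diag_trmx.
rewrite trmx_mul -map_trmx trmxK trmxK; exact.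
Qed.

End Main.

End Helpers.

Local Open Scope ring_scope.
Local Open Scope complex_scope.
Local Open Scope sesquilinear_scope.

Theorem lemma5 (R : realType) (n : nat) (hn : (2 <= n)%N)
  (psi : 'I_2 -> 'I_2 -> 'I_n -> R[i]) :
  (exists (U V : 'M[R[i]]_2) (W : 'M[R[i]]_n),
     [/\ U \is unitarymx, V \is unitarymx, W \is unitarymx &
         forall l : 'I_n,
           is_diag_mx ((coef_mx psi U V W l)^t* *m coef_mx psi U V W l)]) /\
  (exists (U V : 'M[R[i]]_2) (W : 'M[R[i]]_n),
     [/\ U \is unitarymx, V \is unitarymx, W \is unitarymx &
         forall l : 'I_n,
           is_diag_mx (coef_mx psi U V W l *m (coef_mx psi U V W l)^t*)]).
Proof.
split; [exact: Helpers.part1 | exact: Helpers.part2].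
Qed.
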